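(* Let $v_1,v_2\in L_2(0,1)$ be complex-valued, and for $\psi\in W_2^1(0,1)$ define $$A\psi(x)=i\psi'(x)+v_1(x)\Big[\psi(0)-\tfrac{i}{2}\langle\psi,v_1\rangle\Big]+v_2(x)\Big[\psi(1)+\tfrac{i}{2}\langle\psi,v_2\rangle\Big].$$ Then for all $\psi,\varphi\in W_2^1(0,1)$, $$\langle A\psi,\varphi\rangle-\langle\psi,A\varphi\rangle=i\Big\{\big[\psi(1)+i\langle\psi,v_2\rangle\big]\overline{\big[\varphi(1)+i\langle\varphi,v_2\rangle\big]}-\big[\psi(0)-i\langle\psi,v_1\rangle\big]\overline{\big[\varphi(0)-i\langle\varphi,v_1\rangle\big]}\Big\}.$$
   Context: $\langle f,g\rangle=\int_0^1 f(x)\overline{g(x)}\,dx$ is the inner product of $L_2(0,1)$; $W_2^1(0,1)$ is the Sobolev space. *)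

(* Defs.v *)
From HB Require Import structures.
From mathcomp Require Import all_boot all_order all_algebra.
From mathcomp Require Import all_classical all_reals all_analysis.
From mathcomp Require Import complex.
Set Implicit Arguments. Unset Strict Implicit. Unset Printing Implicit Defensive.
Import Order.TTheory GRing.Theory Num.Theory.
Local Open Scope ring_scope.
Local Open Scope classical_set_scope.
Local Open Scope complex_scope.

Definition Icc (R : realType) (a b : R) : set R := `[a, b].

Definition reF (R : realType) (f : R -> R[i]) : R -> R := fun x => complex.Re (f x).
Definition imF (R : realType) (f : R -> R[i]) : R -> R := fun x => complex.Im (f x).

Definition cint (R : realType) (D : set R) (f : R -> R[i]) : R[i] :=
  Complex (Rintegral (@lebesgue_measure R) D (reF f))
          (Rintegral (@lebesgue_measure R) D (imF f)).

Definition L2 (R : realType) (f : R -> R[i]) : Prop :=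
  measurable_fun (Icc 0 1) (reF f) /\
  measurable_fun (Icc 0 1) (imF f) /\
  (@lebesgue_measure R).-integrable (Icc 0 1)
     (fun x => ((reF f x) ^+ 2 + (imF f x) ^+ 2)%:E).

Definition inner (R : realType) (f g : R -> R[i]) : R[i] :=
  cint (Icc 0 1) (fun x => f x * conjc (g x)).

(* psi belongs to W_2^1(0,1) with (weak) derivative dpsi in L_2(0,1):
   psi is absolutely continuous with psi(x) = psi(0) + \int_0^x dpsi on [0,1]. *)
Definition W21 (R : realType) (psi dpsi : R -> R[i]) : Prop :=
  L2 dpsi /\
  forall x : R, 0 <= x <= 1 -> psi x = psi 0 + cint (Icc 0 x) dpsi.

Definition Aop (R : realType) (v1 v2 psi dpsi : R -> R[i]) : R -> R[i] :=
  fun x => 'i * dpsi x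
           + v1 x * (psi 0 - 'i / 2%:R * inner psi v1)
           + v2 x * (psi 1 + 'i / 2%:R * inner psi v2).

(* Main.v *)
Require Import Defs.
From HB Require Import structures.
From mathcomp Require Import all_boot all_order all_algebra.
From mathcomp Require Import all_classical all_reals all_analysis.
From mathcomp Require Import complex.
From mathcomp Require Import ring lra.
From mathcomp Require Import measurable_realfun.
Import Order.TTheory GRing.Theory Num.Theory.
Import numFieldNormedType.Exports.
Local Open Scope ring_scope.
Local Open Scope classical_set_scope.

Section S.
Context {R : realType}.
Notation mu := (@lebesgue_measure R).
Let D : set R := `[0, 1].

Lemma HL (f : R -> R) (B : set R) : measurable B ->
  mu.-integrable D (EFin \o f) ->
  mu.-integrable setT (fun x => ((f \_ D) x * \1_B x)%:E) /\
  (\int[mu]_x ((f \_ D) x * \1_B x)%:E = (\int[mu]_(x in D `&` B) f x)%:E)%E.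
Proof.
move=> mB fi.
have E : (fun x => ((f \_ D) x * \1_B x)%:E) = (EFin \o f) \_ (D `&` B).
  apply/funext => x; rewrite !patchE /indic /= in_setI.
  by case: (x \in D); case: (x \in B) => /=; rewrite ?mulr1 ?mulr0 ?mul0r; reflexivity.
have mD : measurable D by exact: measurable_itv.
have iDB : mu.-integrable (D `&` B) (EFin \o f).
  by apply: integrableS fi => //; exact: measurableI.
split.
  rewrite E; apply/integrable_restrict => //; first exact: measurableI.
  by rewrite setTI.
rewrite E -integral_mkcond /Rintegral fineK //.
by apply: integrable_fin_num => //; exact: measurableI.
Qed.


Let A : set (R * R) := [set z | z.2 < z.1].

Lemma mA : measurable A.
Proof.
have mfs : measurable_fun setT (fun z : R * R => z.1 - z.2).
  exact: measurable_funB measurable_fst measurable_snd.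
have := mfs measurableT _ (measurable_itv `]0, +oo[%R).
rewrite setTI; congr measurable; apply/seteqP; split => z /=;
  by rewrite in_itv /= andbT subr_gt0.
Qed.

Lemma sec1 (x y : R) : \1_A (x, y) = \1_(`]-oo, x[) y :> R.
Proof.
by rewrite /indic; congr (_%:R).
Qed.

Lemma sec1_aux (x y : R) : ((x, y) \in A) = (x \in `]y, +oo[).
Proof.
apply/idP/idP => H.
  apply/mem_set; have := set_mem H; rewrite /A /= in_itv /= andbT //.
have := set_mem H; rewrite /= in_itv /= andbT => H'; exact/mem_set.
Qed.

Lemma sec2 (x y : R) : \1_A (x, y) = \1_(`]y, +oo[) x :> R.
Proof.
by rewrite /indic (sec1_aux x y).
Qed.


Lemma mrestr (f : R -> R) : mu.-integrable D (EFin \o f) ->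
  measurable_fun setT (f \_ D).
Proof.
move=> fi; apply/measurable_restrict => //; first exact: measurable_itv.
by rewrite setTI; apply/measurable_EFinP; exact: (measurable_int _ fi).
Qed.

Lemma iabs (f : R -> R) : mu.-integrable D (EFin \o f) ->
  (\int[mu]_y `|(f \_ D) y|%:E < +oo)%E.
Proof.
move=> fi.
have : mu.-integrable setT (EFin \o (f \_ D)).
  rewrite -restrict_EFin; apply/integrable_restrict => //; first exact: measurable_itv.
  by rewrite setTI.
by move/integrableP => [_].
Qed.

Lemma iabs_fin (f : R -> R) : mu.-integrable D (EFin \o f) ->
  (\int[mu]_y `|(f \_ D) y|%:E)%E = (fine (\int[mu]_y `|(f \_ D) y|%:E))%:E.
Proof.
move=> fi; rewrite fineK // ge0_fin_numE ?iabs //; exact: integral_ge0.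
Qed.


Lemma setD1 x : x \in D -> D `&` `]-oo, x[ = `[0, x[.
Proof.
move/set_mem; rewrite /D /= in_itv /= => /andP[x0 x1].
apply/seteqP; split => z /=; rewrite !in_itv /=.
  by move=> [/andP[-> _] ->].
move=> /andP[z0 zx]; split; last by [].
by rewrite z0 /= (le_trans (ltW zx)).
Qed.

Lemma setD2 y : y \in D -> D `&` `]y, +oo[ = `]y, 1].
Proof.
move/set_mem; rewrite /D /= in_itv /= => /andP[y0 y1].
apply/seteqP; split => z /=; rewrite !in_itv /= ?andbT.
  by move=> [/andP[_ ->] ->].
move=> /andP[yz z1]; split; last by [].
by rewrite z1 andbT (le_trans y0) // ltW.
Qed.

Lemma FL (h g : R -> R) : mu.-integrable D (EFin \o h) -> mu.-integrable D (EFin \o g) ->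
  mu.-integrable D (EFin \o (fun x => h x * \int[mu]_(t in `[0, x]) g t)) /\
  \int[mu]_(x in D) (h x * \int[mu]_(t in `[0, x]) g t) =
  \int[mu]_(t in D) (g t * \int[mu]_(x in `]t, 1]) h x).
Proof.
move=> hi gi.
have mD : measurable D by exact: measurable_itv.
have mhD := @mrestr h hi; have mgD := @mrestr g gi.
pose k := fun z : R * R => ((h \_ D) z.1 * (g \_ D) z.2 * \1_A z)%:E.
have kx x y : k (x, y) = ((h \_ D) x * ((g \_ D) y * \1_(`]-oo, x[) y))%:E.
  by rewrite /k /= sec1 mulrA.
have ky x y : k (x, y) = ((g \_ D) y * ((h \_ D) x * \1_(`]y, +oo[) x))%:E.
  by rewrite /k /= sec2 [(h \_ D) x * _]mulrC -mulrA.
have mk : measurable_fun setT k.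
  apply/measurable_EFinP; apply: measurable_funM; last exact: measurable_indic mA.
  apply: measurable_funM.
    exact: measurableT_comp mhD measurable_fst.
  exact: measurableT_comp mgD measurable_snd.
have ik : (mu \x mu)%E.-integrable setT k.
  apply/integrable12ltyP => //.
  have ih := @iabs_fin h hi; have ig := @iabs_fin g gi.
  set ch := fine _ in ih; set cg := fine _ in ig.
  have mgabs : measurable_fun setT (fun y => `|(g \_ D) y|%:E).
    by apply/measurable_EFinP; exact: (measurableT_comp (@normr_measurable R setT) mgD).
  have mhabs : measurable_fun setT (fun y => `|(h \_ D) y|%:E).
    by apply/measurable_EFinP; exact: (measurableT_comp (@normr_measurable R setT) mhD).
  apply: (@le_lt_trans _ _ (\int[mu]_x (`|(h \_ D) x| * cg)%:E)%E).
    apply: ge0_le_integral => //.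
    - by move=> x _; apply: integral_ge0.
    - apply: (@measurable_fun_fubini_tonelli_F _ _ _ _ _ mu (fun z => `|k z|%E)) => //.
      exact: (measurableT_comp (@abse_measurable R setT) mk).
    - apply/measurable_EFinP; apply: measurable_funM => //.
      exact: (measurableT_comp (@normr_measurable R setT) mhD).
    move=> x _; rewrite EFinM -ig -ge0_integralZl //.
    apply: ge0_le_integral => //.
    - under eq_fun do rewrite kx.
      apply: (measurableT_comp (@abse_measurable R setT)); apply/measurable_EFinP.
      apply: measurable_funM => //; apply: measurable_funM => //.
    - apply: measurable_funeM => //.
    move=> y _; rewrite kx abse_EFin -EFinM lee_fin !normrM ler_wpM2l //.
    by rewrite /indic; case: (y \in _) => /=; rewrite ?normr1 ?normr0 ?mulr1 ?mulr0.
  under eq_integral do rewrite EFinM.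
  rewrite ge0_integralZr //.
    by rewrite -[X in (X * _)%E]/(\int[mu]_x `|(h \_ D) x|%:E)%E ih -EFinM ltry.
  by rewrite lee_fin fine_ge0 // integral_ge0.
have Fx x : (\int[mu]_y k (x, y))%E =
    (((fun x => h x * \int[mu]_(t in `[0, x]) g t) \_ D) x)%:E.
  under eq_integral do rewrite kx EFinM.
  have [i1 i2] := @HL g `]-oo, x[ (measurable_itv _) gi.
  rewrite integralZl // -[X in (_ * X)%E]/(\int[mu]_y ((g \_ D) y * \1_(`]-oo, x[) y)%:E)%E.
  rewrite i2 -EFinM !patchE; case: (boolP (x \in D)) => xD; last by rewrite mul0r.
  rewrite setD1 // Rintegral_itv_bndo_bndc //.
  apply: integrableS gi => //; rewrite /D; apply: subset_itv; rewrite bnd_simp //.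
  by move/set_mem: xD; rewrite /D /= in_itv /= => /andP[].
have Gy y : (\int[mu]_x k (x, y))%E =
    (((fun t => g t * \int[mu]_(x in `]t, 1]) h x) \_ D) y)%:E.
  under eq_integral do rewrite ky EFinM.
  have [i1 i2] := @HL h `]y, +oo[ (measurable_itv _) hi.
  rewrite integralZl // -[X in (_ * X)%E]/(\int[mu]_x ((h \_ D) x * \1_(`]y, +oo[) x)%:E)%E.
  rewrite i2 -EFinM !patchE; case: (boolP (y \in D)) => yD; last by rewrite mul0r.
  by rewrite setD2.
split.
  rewrite -(setTI D); apply/integrable_restrict => //.
  rewrite restrict_EFin; apply: (eq_integrable measurableT _ _ _ (integrable_fubini_F ik)) => x _.
  by rewrite /fubini_F Fx.
rewrite /Rintegral integral_mkcond [in RHS]integral_mkcond; congr fine.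
transitivity (\int[mu]_x \int[mu]_y k (x, y))%E.
  apply: eq_integral => x _; rewrite Fx !patchE; by case: (x \in D).
rewrite (Fubini ik); apply: eq_integral => y _; rewrite Gy !patchE; by case: (y \in D).
Qed.

Lemma inD x : x \in D -> 0 <= x <= 1.
Proof. by move/set_mem; rewrite /D /= in_itv. Qed.

Lemma iZ (c : R) (f : R -> R) : mu.-integrable D (EFin \o f) ->
  mu.-integrable D (EFin \o (fun x => c * f x)).
Proof.
move=> fi.
have mD : measurable (D : set (measurableTypeR R)) by exact: measurable_itv.
apply: (eq_integrable mD _ _ _ (integrableZl mD c fi)) => x _.
by rewrite /= EFinM.
Qed.

Lemma IntP (h g G : R -> R) : mu.-integrable D (EFin \o h) ->
  mu.-integrable D (EFin \o g) ->
  (forall x, 0 <= x <= 1 -> G x = G 0 + \int[mu]_(t in `[0, x]) g t) ->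
  mu.-integrable D (EFin \o (fun x => h x * G x)).
Proof.
move=> hi gi HG.
have mD : measurable (D : set (measurableTypeR R)) by exact: measurable_itv.
have [i1 _] := @FL h g hi gi.
have i2 := integrableZl mD (G 0) hi.
apply: (eq_integrable mD _ _ _ (integrableD mD i2 i1)) => x xD.
rewrite /= -EFinM -EFinD (HG x (@inD x xD)); congr EFin; ring.
Qed.

Lemma IBP (f g F G : R -> R) :
  mu.-integrable D (EFin \o f) -> mu.-integrable D (EFin \o g) ->
  (forall x, 0 <= x <= 1 -> F x = F 0 + \int[mu]_(t in `[0, x]) f t) ->
  (forall x, 0 <= x <= 1 -> G x = G 0 + \int[mu]_(t in `[0, x]) g t) ->
  \int[mu]_(x in D) (f x * G x) + \int[mu]_(x in D) (F x * g x) =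
  F 1 * G 1 - F 0 * G 0.
Proof.
move=> fi gi HF HG.
have mD : measurable (D : set (measurableTypeR R)) by exact: measurable_itv.
have [i1 e1] := @FL f g fi gi.
have [i2 _] := @FL g f gi fi.
set If := \int[mu]_(x in D) f x.
set Ig := \int[mu]_(x in D) g x.
have F1 : F 1 = F 0 + If by rewrite HF ?lexx ?ler01.
have G1 : G 1 = G 0 + Ig by rewrite HG ?lexx ?ler01.
have E1 : \int[mu]_(x in D) (f x * G x) =
    G 0 * If + \int[mu]_(x in D) (f x * \int[mu]_(t in `[0, x]) g t).
  rewrite -RintegralZl // -RintegralD //; last exact: iZ.
  apply: eq_Rintegral => x xD; rewrite (HG x (@inD x xD)) /=; ring.
have E2 : \int[mu]_(x in D) (F x * g x) =
    F 0 * Ig + \int[mu]_(x in D) (g x * \int[mu]_(t in `[0, x]) f t).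
  rewrite -RintegralZl // -RintegralD //; last exact: iZ.
  apply: eq_Rintegral => x xD; rewrite (HF x (@inD x xD)) /=; ring.
have E3 : \int[mu]_(t in D) (g t * \int[mu]_(x in `]t, 1]) f x) =
    If * Ig - \int[mu]_(x in D) (g x * \int[mu]_(t in `[0, x]) f t).
  rewrite -RintegralZl // -RintegralB //; last exact: iZ.
  apply: eq_Rintegral => x xD; rewrite /=.
  have /andP[x0 x1] := @inD x xD.
  rewrite -(Rintegral_itvB fi) ?bnd_simp //; rewrite /If /D; ring.
rewrite E1 E2 e1 E3 F1 G1; ring.
Qed.

Lemma iD (f g : R -> R) : mu.-integrable D (EFin \o f) -> mu.-integrable D (EFin \o g) ->
  mu.-integrable D (EFin \o (fun x => f x + g x)).
Proof.
move=> fi gi.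
have mD : measurable (D : set (measurableTypeR R)) by exact: measurable_itv.
apply: (eq_integrable mD _ _ _ (integrableD mD fi gi)) => x _.
by rewrite /= EFinD.
Qed.

Lemma iB (f g : R -> R) : mu.-integrable D (EFin \o f) -> mu.-integrable D (EFin \o g) ->
  mu.-integrable D (EFin \o (fun x => f x - g x)).
Proof.
move=> fi gi.
have gi' := @iZ (-1) g gi.
have mD : measurable (D : set (measurableTypeR R)) by exact: measurable_itv.
apply: (eq_integrable mD _ _ _ (@iD f _ fi gi')).
by move=> x _; rewrite /= mulN1r.
Qed.

Lemma i1 : mu.-integrable D (EFin \o (fun _ => 1 : R)).
Proof.
have mD : measurable (D : set (measurableTypeR R)) by exact: measurable_itv.
apply/integrableP; split; first exact/measurable_EFinP/measurable_cst.
rewrite (_ : (fun x => _) = cst 1%E); last by apply/funext => x; rewrite /= normr1.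
rewrite integral_cst // mul1e -[X in (X < _)%E]/(@lebesgue_measure R [set` `[0, 1]%R]).
by rewrite lebesgue_measure_itv /= lte_fin ltr01 sube0 ltry.
Qed.

Lemma IntP' (h g G : R -> R) : mu.-integrable D (EFin \o h) ->
  mu.-integrable D (EFin \o g) ->
  (forall x, 0 <= x <= 1 -> G x = G 0 + \int[mu]_(t in `[0, x]) g t) ->
  mu.-integrable D (EFin \o (fun x => G x * h x)).
Proof.
move=> hi gi HG.
have mD : measurable (D : set (measurableTypeR R)) by exact: measurable_itv.
apply: (eq_integrable mD _ _ _ (@IntP h g G hi gi HG)).
by move=> x _; rewrite /= mulrC.
Qed.

End S.

Local Open Scope complex_scope.

Section C.
Context {R : realType}.
Notation mu := (@lebesgue_measure R).
Let D : set R := `[0, 1].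

Definition cI (f : R -> R[i]) :=
  mu.-integrable D (EFin \o reF f) /\ mu.-integrable D (EFin \o imF f).

Lemma cI_eq f g : (forall x, f x = g x) -> cI f -> cI g.
Proof. by move=> /funext ->. Qed.

Lemma cintD f g : cI f -> cI g ->
  cint D (fun x => f x + g x) = cint D f + cint D g.
Proof.
move=> [f1 f2] [g1 g2]; rewrite /cint.
have mD : measurable (D : set (measurableTypeR R)) by exact: measurable_itv.
congr Complex.
  transitivity (\int[mu]_(x in D) (reF f x + reF g x)).
    by apply: eq_Rintegral => x _; rewrite /reF; case: (f x) => a b; case: (g x).
  exact: RintegralD.
transitivity (\int[mu]_(x in D) (imF f x + imF g x)).
  by apply: eq_Rintegral => x _; rewrite /imF; case: (f x) => a b; case: (g x).
exact: RintegralD.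
Qed.

Lemma ieq {f g : R -> R} : mu.-integrable D (EFin \o f) ->
  (forall x, f x = g x) -> mu.-integrable D (EFin \o g).
Proof. by move=> fi /funext <-. Qed.

Lemma cintE g : cint D g =
  Complex (\int[mu]_(x in D) reF g x) (\int[mu]_(x in D) imF g x).
Proof. by []. Qed.

Lemma cI_D f g : cI f -> cI g -> cI (fun x => f x + g x).
Proof.
move=> [f1 f2] [g1 g2]; split.
  by move: (iD _ _ f1 g1) => /ieq; apply => x; rewrite /reF; case: (f x) => a b; case: (g x).
by move: (iD _ _ f2 g2) => /ieq; apply => x; rewrite /imF; case: (f x) => a b; case: (g x).
Qed.

Lemma cI_Z c f : cI f -> cI (fun x => c * f x).
Proof.
move=> [f1 f2]; split.
  move: (iB _ _ (iZ (complex.Re c) _ f1) (iZ (complex.Im c) _ f2)) => /ieq; apply => x.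
  by rewrite /reF /imF; case: c => a b; case: (f x).
move: (iD _ _ (iZ (complex.Re c) _ f2) (iZ (complex.Im c) _ f1)) => /ieq; apply => x.
by rewrite /reF /imF; case: c => a b; case: (f x).
Qed.

Lemma cintZ c f : cI f -> cint D (fun x => c * f x) = c * cint D f.
Proof.
move=> [f1 f2].
have mD : measurable (D : set (measurableTypeR R)) by exact: measurable_itv.
rewrite !cintE.
have -> : \int[mu]_(x in D) reF (fun x => c * f x) x =
    complex.Re c * \int[mu]_(x in D) reF f x - complex.Im c * \int[mu]_(x in D) imF f x.
  transitivity (\int[mu]_(x in D) (complex.Re c * reF f x - complex.Im c * imF f x)).
    apply: eq_Rintegral => x _; rewrite /reF /imF.
    by case: c => a b; case: (f x).
  by rewrite RintegralB //; [rewrite !RintegralZl|exact: iZ|exact: iZ].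
have -> : \int[mu]_(x in D) imF (fun x => c * f x) x =
    complex.Re c * \int[mu]_(x in D) imF f x + complex.Im c * \int[mu]_(x in D) reF f x.
  transitivity (\int[mu]_(x in D) (complex.Re c * imF f x + complex.Im c * reF f x)).
    apply: eq_Rintegral => x _; rewrite /reF /imF.
    by case: c => a b; case: (f x).
  by rewrite RintegralD //; [rewrite !RintegralZl|exact: iZ|exact: iZ].
by case: c => a b.
Qed.

Lemma cI_conj f : cI f -> cI (fun x => conjc (f x)).
Proof.
move=> [f1 f2]; split.
  by move: f1 => /ieq; apply => x; rewrite /reF; case: (f x).
move: (iZ (-1) _ f2) => /ieq; apply => x.
by rewrite /imF; case: (f x) => a b /=; rewrite mulN1r.
Qed.

Lemma cint_conj f : cI f -> cint D (fun x => conjc (f x)) = conjc (cint D f).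
Proof.
move=> [f1 f2].
have mD : measurable (D : set (measurableTypeR R)) by exact: measurable_itv.
rewrite !cintE /=.
congr Complex.
  by apply: eq_Rintegral => x _; rewrite /reF; case: (f x).
transitivity (\int[mu]_(x in D) (-1 * imF f x)).
  by apply: eq_Rintegral => x _; rewrite /imF; case: (f x) => a b /=; rewrite mulN1r.
by rewrite RintegralZl // mulN1r.
Qed.

Lemma L2cI v : L2 v -> cI v.
Proof.
move=> [m1 [m2 i2]].
have mD : measurable (D : set (measurableTypeR R)) by exact: measurable_itv.
have ib := iD _ _ i1 i2.
split.
  apply: le_integrable ib => //; first exact/measurable_EFinP.
  move=> x _; rewrite /= lee_fin.
  set a := reF v x; set b := imF v x.
  rewrite (ger0_norm (x := 1 + _)); last by rewrite addr_ge0 // addr_ge0 // sqr_ge0.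
  rewrite -(real_normK (num_real a)).
  have t0 : 0 <= `|a| by [].
  have b0 : 0 <= b ^+ 2 by rewrite sqr_ge0.
  nra.
apply: le_integrable ib => //; first exact/measurable_EFinP.
move=> x _; rewrite /= lee_fin.
set a := reF v x; set b := imF v x.
rewrite (ger0_norm (x := 1 + _)); last by rewrite addr_ge0 // addr_ge0 // sqr_ge0.
rewrite -(real_normK (num_real b)).
have t0 : 0 <= `|b| by [].
have b0 : 0 <= a ^+ 2 by rewrite sqr_ge0.
nra.
Qed.

Lemma reAC G dG : W21 G dG -> forall x, 0 <= x <= 1 ->
  reF G x = reF G 0 + \int[mu]_(t in `[0, x]) reF dG t.
Proof. by move=> [_ H] x hx; rewrite /reF (H x hx); case: (G 0). Qed.

Lemma imAC G dG : W21 G dG -> forall x, 0 <= x <= 1 ->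
  imF G x = imF G 0 + \int[mu]_(t in `[0, x]) imF dG t.
Proof. by move=> [_ H] x hx; rewrite /imF (H x hx); case: (G 0). Qed.

Lemma W21cI G dG : W21 G dG -> cI dG.
Proof. by move=> [/L2cI]. Qed.

Lemma cI_mulconj h G dG : cI h -> W21 G dG -> cI (fun x => h x * conjc (G x)).
Proof.
move=> [h1 h2] HG.
have [g1 g2] := W21cI _ _ HG.
have r := reAC _ _ HG; have m := imAC _ _ HG.
split.
  move: (iD _ _ (IntP _ _ _ h1 g1 r) (IntP _ _ _ h2 g2 m)) => /ieq; apply => x.
  by rewrite /reF /imF; case: (h x) => a b; case: (G x) => c d /=; ring.
move: (iB _ _ (IntP _ _ _ h2 g1 r) (IntP _ _ _ h1 g2 m)) => /ieq; apply => x.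
by rewrite /reF /imF; case: (h x) => a b; case: (G x) => c d /=; ring.
Qed.

Lemma cI_Gmulconj h G dG : cI h -> W21 G dG -> cI (fun x => G x * conjc (h x)).
Proof.
move=> [h1 h2] HG.
have [g1 g2] := W21cI _ _ HG.
have r := reAC _ _ HG; have m := imAC _ _ HG.
split.
  move: (iD _ _ (IntP' _ _ _ h1 g1 r) (IntP' _ _ _ h2 g2 m)) => /ieq; apply => x.
  by rewrite /reF /imF; case: (h x) => a b; case: (G x) => c d /=; ring.
move: (iB _ _ (IntP' _ _ _ h1 g2 m) (IntP' _ _ _ h2 g1 r)) => /ieq; apply => x.
by rewrite /reF /imF; case: (h x) => a b; case: (G x) => c d /=; ring.
Qed.

Lemma cIBP psi dpsi phi dphi : W21 psi dpsi -> W21 phi dphi ->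
  cint D (fun x => dpsi x * conjc (phi x)) + cint D (fun x => psi x * conjc (dphi x)) =
  psi 1 * conjc (phi 1) - psi 0 * conjc (phi 0).
Proof.
move=> Hp Hq.
have mD : measurable (D : set (measurableTypeR R)) by exact: measurable_itv.
have [p1 p2] := W21cI _ _ Hp; have [q1 q2] := W21cI _ _ Hq.
have rp := reAC _ _ Hp; have mp := imAC _ _ Hp.
have rq := reAC _ _ Hq; have mq := imAC _ _ Hq.
rewrite !cintE.
have eR1 : \int[mu]_(x in D) reF (fun x => dpsi x * conjc (phi x)) x =
    \int[mu]_(x in D) (reF dpsi x * reF phi x) + \int[mu]_(x in D) (imF dpsi x * imF phi x).
  rewrite -RintegralD //; [|exact: (IntP _ _ _ p1 q1 rq)|exact: (IntP _ _ _ p2 q2 mq)].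
  apply: eq_Rintegral => x _; rewrite /reF /imF.
  by case: (dpsi x) => a b; case: (phi x) => c d /=; ring.
have eR2 : \int[mu]_(x in D) reF (fun x => psi x * conjc (dphi x)) x =
    \int[mu]_(x in D) (reF psi x * reF dphi x) + \int[mu]_(x in D) (imF psi x * imF dphi x).
  rewrite -RintegralD //; [|exact: (IntP' _ _ _ q1 p1 rp)|exact: (IntP' _ _ _ q2 p2 mp)].
  apply: eq_Rintegral => x _; rewrite /reF /imF.
  by case: (psi x) => a b; case: (dphi x) => c d /=; ring.
have eI1 : \int[mu]_(x in D) imF (fun x => dpsi x * conjc (phi x)) x =
    \int[mu]_(x in D) (imF dpsi x * reF phi x) - \int[mu]_(x in D) (reF dpsi x * imF phi x).
  rewrite -RintegralB //; [|exact: (IntP _ _ _ p2 q1 rq)|exact: (IntP _ _ _ p1 q2 mq)].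
  apply: eq_Rintegral => x _; rewrite /reF /imF.
  by case: (dpsi x) => a b; case: (phi x) => c d /=; ring.
have eI2 : \int[mu]_(x in D) imF (fun x => psi x * conjc (dphi x)) x =
    \int[mu]_(x in D) (imF psi x * reF dphi x) - \int[mu]_(x in D) (reF psi x * imF dphi x).
  rewrite -RintegralB //; [|exact: (IntP' _ _ _ q1 p2 mp)|exact: (IntP' _ _ _ q2 p1 rp)].
  apply: eq_Rintegral => x _; rewrite /reF /imF.
  by case: (psi x) => a b; case: (dphi x) => c d /=; ring.
have I1 := IBP _ _ _ _ p1 q1 rp rq.
have I2 := IBP _ _ _ _ p2 q2 mp mq.
have I3 := IBP _ _ _ _ p2 q1 mp rq.
have I4 := IBP _ _ _ _ p1 q2 rp mq.
rewrite eR1 eR2 eI1 eI2.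
move: I1 I2 I3 I4; rewrite /reF /imF.
case: (psi 1) => a1 b1; case: (psi 0) => a0 b0; case: (phi 1) => c1 d1; case: (phi 0) => c0 d0 /=.
move=> I1 I2 I3 I4; apply/eqP; rewrite eq_complex /=; apply/andP; split; apply/eqP.
  lra.
lra.
Qed.

End C.
Lemma i2 (R : realType) : ('i / 2%:R : R[i]) = Complex 0 (2^-1).
Proof.
apply: (@mulIf _ 2%:R); first by rewrite pnatr_eq0.
rewrite mulfVK ?pnatr_eq0 //.
apply/eqP; rewrite eq_complex /=; apply/andP; split; apply/eqP.
all: rewrite ?mulr0n ?mulr1n /=.
all: field; rewrite ?pnatr_eq0 //.
Qed.
Lemma alg (R : realType) (psi0 psi1 phi0 phi1 p1 p2 q1 q2 X Y : R[i]) :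
  X + Y = psi1 * conjc phi1 - psi0 * conjc phi0 ->
  ('i * X + (psi0 - Complex 0 (2^-1) * p1) * conjc q1 + (psi1 + Complex 0 (2^-1) * p2) * conjc q2)
  - ((- 'i) * Y + conjc (phi0 - Complex 0 (2^-1) * q1) * p1 + conjc (phi1 + Complex 0 (2^-1) * q2) * p2)
  = 'i * ((psi1 + 'i * p2) * conjc (phi1 + 'i * q2)
        - (psi0 - 'i * p1) * conjc (phi0 - 'i * q1)).
Proof.
move=> hXY.
have -> : X = psi1 * conjc phi1 - psi0 * conjc phi0 - Y by rewrite -hXY; ring.
clear hXY.
case: psi0 => a0 b0; case: psi1 => a1 b1; case: phi0 => c0 d0; case: phi1 => c1 d1.
case: p1 => e1 f1; case: p2 => e2 f2; case: q1 => g1 h1; case: q2 => g2 h2.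
case: Y => y1 y2.
apply/eqP; rewrite eq_complex /=; apply/andP; split; apply/eqP.
all: field; rewrite ?pnatr_eq0 //.
Qed.

Lemma pw2 (R : realType) (p d w1 w2 a b : R[i]) :
  p * conjc ('i * d + w1 * a + w2 * b) =
  (- 'i) * (p * conjc d) + conjc a * (p * conjc w1) + conjc b * (p * conjc w2).
Proof.
case: p => p1 p2; case: d => d1 d2; case: w1 => e1 e2; case: w2 => f1 f2.
case: a => a1 a2; case: b => b1 b2; apply/eqP; rewrite eq_complex /=.
by apply/andP; split; apply/eqP; ring.
Qed.

Theorem lemma5p1 (R : realType) (v1 v2 psi dpsi phi dphi : R -> R[i]) :
  L2 v1 -> L2 v2 -> W21 psi dpsi -> W21 phi dphi ->
  inner (Aop v1 v2 psi dpsi) phi - inner psi (Aop v1 v2 phi dphi) =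
  'i * ((psi 1 + 'i * inner psi v2) * conjc (phi 1 + 'i * inner phi v2)
        - (psi 0 - 'i * inner psi v1) * conjc (phi 0 - 'i * inner phi v1)).
Proof.
move=> hv1 hv2 Hp Hq.
have cv1 := L2cI _ hv1; have cv2 := L2cI _ hv2.
have cp := W21cI _ _ Hp; have cq := W21cI _ _ Hq.
have ci : conjc ('i : R[i]) = - 'i.
  by apply/eqP; rewrite eq_complex /= oppr0 !eqxx.
have conjE (f g : R -> R[i]) : cI (fun x => f x * conjc (g x)) ->
    cint `[0, 1] (fun x => g x * conjc (f x)) =
    conjc (cint `[0, 1] (fun x => f x * conjc (g x))).
  move=> cfg; rewrite -cint_conj //; congr cint; apply/funext => x.
  case: (f x) => a b; case: (g x) => c d; apply/eqP; rewrite eq_complex /=.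
  by apply/andP; split; apply/eqP; ring.
have E1 : inner (Aop v1 v2 psi dpsi) phi =
    'i * cint `[0, 1] (fun x => dpsi x * conjc (phi x))
    + (psi 0 - 'i / 2%:R * inner psi v1) * conjc (inner phi v1)
    + (psi 1 + 'i / 2%:R * inner psi v2) * conjc (inner phi v2).
  rewrite /inner /Aop /Icc.
  set a := (psi 0 - _); set b := (psi 1 + _).
  have -> : (fun x => ('i * dpsi x + v1 x * a + v2 x * b) * conjc (phi x)) =
      (fun x => ('i * (dpsi x * conjc (phi x)) + a * (v1 x * conjc (phi x)))
                + b * (v2 x * conjc (phi x))).
    by apply/funext => x; ring.
  have c1 := cI_mulconj _ _ _ cp Hq.
  have c2 := cI_mulconj _ _ _ cv1 Hq.
  have c3 := cI_mulconj _ _ _ cv2 Hq.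
  rewrite cintD; [|apply: cI_D; apply: cI_Z => // | by apply: cI_Z].
  rewrite cintD; [|by apply: cI_Z | by apply: cI_Z].
  rewrite !cintZ //.
  by rewrite (conjE phi v1 (cI_Gmulconj _ _ _ cv1 Hq)) (conjE phi v2 (cI_Gmulconj _ _ _ cv2 Hq)).
have E2 : inner psi (Aop v1 v2 phi dphi) =
    (- 'i) * cint `[0, 1] (fun x => psi x * conjc (dphi x))
    + conjc (phi 0 - 'i / 2%:R * inner phi v1) * inner psi v1
    + conjc (phi 1 + 'i / 2%:R * inner phi v2) * inner psi v2.
  rewrite /inner /Aop /Icc.
  set a := (phi 0 - _); set b := (phi 1 + _).
  have -> : (fun x => psi x * conjc ('i * dphi x + v1 x * a + v2 x * b)) =
      (fun x => ((- 'i) * (psi x * conjc (dphi x)) + conjc a * (psi x * conjc (v1 x)))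
                + conjc b * (psi x * conjc (v2 x))).
    by apply/funext => x; rewrite pw2.
  have c1 := cI_Gmulconj _ _ _ cq Hp.
  have c2 := cI_Gmulconj _ _ _ cv1 Hp.
  have c3 := cI_Gmulconj _ _ _ cv2 Hp.
  rewrite cintD; [|apply: cI_D; apply: cI_Z => // | by apply: cI_Z].
  rewrite cintD; [|by apply: cI_Z | by apply: cI_Z].
  by rewrite !cintZ.
rewrite E1 E2 !i2; apply: alg.
exact: cIBP.
Qed.
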